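(* Let $\mathrm{cost}(n)=\ell(n)/\pi(n)$ for nodes $n$ (with value $+\infty$ when $\pi(n)=0$), and for a state $s$ let $\mathrm{cost}(s)=\min\{\mathrm{cost}(n): T(n)=s\}$. Then LevinTS run with policy $\pi$ expands states in best-first order and at their lowest cost first: (i) for any two states $s_1,s_2$ with $\mathrm{cost}(s_1)<\mathrm{cost}(s_2)$, if LevinTS selects a node $n$ with $T(n)=s_2$, then it has previously selected a node $n'$ with $T(n')=s_1$; (ii) for every state $s$, the first node $n$ with $T(n)=s$ selected by LevinTS satisfies $\mathrm{cost}(n)=\mathrm{cost}(s)$.
   Context: Setting: a finite action set $\mathcal{A}$, a set of states $\mathcal{S}$ with initial state $s_0$, a deterministic transition function $T:\mathcal{S}\times\mathcal{A}\to\mathcal{S}$, and a set of goal states $\mathcal{G}\subseteq\mathcal{S}$. Nodes are finite sequences of actions; the root $n_0$ is the empty sequence; $T(n)$ is the state reached from $s_0$ by applying the actions of $n$ in order; the children of $n$ are $na$, $a\in\mathcal{A}$. For a node $n$ consisting of $t$ actions, $\ell(n):=t+1$ (so $\ell(n_0)=1$). A policy is a function $\pi$ from nodes to $[0,1]$ with $\pi(n_0)=1$ and $\pi(n)=\sum_{a\in\mathcal{A}}\pi(na)$; write $\pi(a\mid n)=\pi(na)/\pi(n)$. The policy is Markovian if $\pi(a\mid n_1)=\pi(a\mid n_2)$ for all actions $a$ and all nodes $n_1,n_2$ with $T(n_1)=T(n_2)$. LevinTS: maintain a frontier $\mathcal{F}$, initially $\{n_0\}$, and a record set $\mathcal{V}$,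 initially $\emptyset$. While $\mathcal{F}\neq\emptyset$: remove from $\mathcal{F}$ a node $n$ minimizing $\ell(n)/\pi(n)$ (this is the node selected/expanded at this iteration); if $T(n)\in\mathcal{G}$, stop with success; if $\pi$ is Markovian, then if there is $n'\in\mathcal{V}$ with $T(n')=T(n)$ and $\pi(n')\ge\pi(n)$, skip to the next iteration (state cut), and otherwise add $n$ to $\mathcal{V}$; finally add all children of $n$ to $\mathcal{F}$. *)

(* Defs.v *)
From mathcomp Require Import all_boot all_order all_algebra.
From mathcomp Require Import boolp classical_sets reals ereal.
Set Implicit Arguments. Unset Strict Implicit. Unset Printing Implicit Defensive.
Import Order.TTheory GRing.Theory Num.Theory.
Local Open Scope ring_scope.
Local Open Scope ereal_scope.

Section LevinTS.
Variables (R : realType) (A : finType) (S : Type) (s0 : S) (T : S -> A -> S)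
  (G : S -> Prop) (pi : seq A -> R).

(* nodes are finite action sequences; the root is [::]; children of n are rcons n a *)
Definition node := seq A.

Definition Tn (n : node) : S := foldl T s0 n.

Definition ell (n : node) : nat := (size n).+1.

Definition is_policy : Prop :=
  pi [::] = 1%R /\
  (forall n, (0 <= pi n <= 1)%R) /\
  (forall n : node, pi n = (\sum_(a : A) pi (rcons n a))%R).

Definition cond_pi (a : A) (n : node) : R := (pi (rcons n a) / pi n)%R.

(* Markovian: the conditional distributions agree at nodes reaching the same
   state (whenever they are defined, i.e. pi(n1), pi(n2) > 0) *)
Definition markovian : Prop :=
  forall (a : A) (n1 n2 : node), (0 < pi n1)%R -> (0 < pi n2)%R ->
    Tn n1 = Tn n2 -> cond_pi a n1 = cond_pi a n2.

Definition cost (n : node) : \bar R :=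
  if pi n == 0%R then +oo else ((ell n)%:R / pi n)%:E.

(* cost(s) = min { cost(n) | T(n) = s } (infimum; +oo if s is unreachable) *)
Definition cost_state (s : S) : \bar R :=
  ereal_inf [set cost n | n in [set n | Tn n = s]].

Definition children (n : node) : seq node := [seq rcons n a | a <- enum A].

Record config := Config { frontier : seq node; visited : seq node }.

Definition init_config : config := Config [:: [::]] [::].

Definition state_cut (c : config) (n : node) : Prop :=
  markovian /\ exists2 n', n' \in visited c & Tn n' = Tn n /\ (pi n <= pi n')%R.

(* one iteration of LevinTS selecting (removing from F) the node n.
   Termination on success is modelled by emptying the frontier. *)
Inductive step : config -> node -> config -> Prop :=
  | step_goal c n :
      n \in frontier c -> (forall m, m \in frontier c -> cost n <= cost m) ->
      G (Tn n) -> step c n (Config [::] (visited c))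
  | step_cut c n :
      n \in frontier c -> (forall m, m \in frontier c -> cost n <= cost m) ->
      ~ G (Tn n) -> state_cut c n ->
      step c n (Config (rem n (frontier c)) (visited c))
  | step_expand c n :
      n \in frontier c -> (forall m, m \in frontier c -> cost n <= cost m) ->
      ~ G (Tn n) -> ~ state_cut c n ->
      step c n (Config (rem n (frontier c) ++ children n)
                  (if `[< markovian >] then n :: visited c else visited c)).

(* run c tr : tr is the (finite prefix of the) sequence of nodes selected by
   LevinTS from configuration c, for some resolution of ties *)
Inductive run : config -> seq node -> Prop :=
  | run_nil c : run c [::]
  | run_cons c n c' tr : step c n c' -> run c' tr -> run c (n :: tr).

End LevinTS.

(* Main.v *)
Require Import Defs.
From mathcomp Require Import all_boot all_order all_algebra.
From mathcomp Require Import boolp classical_sets reals ereal.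
From mathcomp Require Import ring lra.
Import Order.TTheory GRing.Theory Num.Theory.
Set Implicit Arguments. Unset Strict Implicit. Unset Printing Implicit Defensive.
Local Open Scope ereal_scope.

Section Aux.
Variables (R : realType) (A : finType) (S : Type) (s0 : S) (T : S -> A -> S)
  (G : S -> Prop) (pi : seq A -> R).
Hypothesis Hpol : is_policy pi.

Lemma pi_ge0 n : (0 <= pi n)%R.
Proof. by case: Hpol => _ [H _]; case/andP: (H n). Qed.

Lemma pi_rcons_le n a : (pi (rcons n a) <= pi n)%R.
Proof.
case: Hpol => _ [_ H]; rewrite [X in (_ <= X)%R]H (bigD1 a) //= lerDl.
by apply: sumr_ge0 => i _; apply: pi_ge0.
Qed.

Lemma pi_cat_le n s : (pi (n ++ s) <= pi n)%R.
Proof.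
elim/last_ind: s => [|s a IH]; first by rewrite cats0.
by rewrite -rcons_cat; apply: le_trans (pi_rcons_le _ _) IH.
Qed.

Lemma div_le (a b p q : R) : (0 <= a)%R -> (a <= b)%R -> (0 < q)%R -> (q <= p)%R ->
  (a / p <= b / q)%R.
Proof.
move=> a0 ab q0 qp; have p0 : (0 < p)%R by apply: lt_le_trans qp.
rewrite ler_pdivrMr // mulrAC ler_pdivlMr //; nra.
Qed.

Lemma cost_rcons n a : cost pi n <= cost pi (rcons n a).
Proof.
rewrite /cost; case E: (pi (rcons n a) == 0%R); first by rewrite leey.
have H : pi (rcons n a) != 0%R by rewrite E.
have p1 : (0 < pi (rcons n a))%R by rewrite lt_def H pi_ge0.
have p0 : (0 < pi n)%R := lt_le_trans p1 (pi_rcons_le _ _).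
rewrite (gt_eqF p0) lee_fin; apply: div_le => //.
by rewrite ler_nat /ell size_rcons.
exact: pi_rcons_le.
Qed.

Lemma cost_cat n s : cost pi n <= cost pi (n ++ s).
Proof.
elim/last_ind: s => [|s a IH]; first by rewrite cats0.
by rewrite -rcons_cat; apply: le_trans IH (cost_rcons _ _).
Qed.

Lemma cost_pos n : cost pi n < +oo -> (0 < pi n)%R.
Proof.
rewrite /cost; case: eqP => [_|/eqP H _]; first by rewrite ltxx.
by rewrite lt_def H pi_ge0.
Qed.

Lemma Tn_cat n s : Tn s0 T (n ++ s) = foldl T (Tn s0 T n) s.
Proof. by rewrite /Tn foldl_cat. Qed.

Lemma markov_ext m n' s : markovian s0 T pi -> (0 < pi m)%R -> (0 < pi n')%R ->
  Tn s0 T n' = Tn s0 T m -> (0 < pi (m ++ s))%R ->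
  (pi (n' ++ s) * pi m = pi (m ++ s) * pi n')%R.
Proof.
move=> Hm pm pn HT; elim/last_ind: s => [|s a IH]; first by rewrite !cats0 mulrC.
rewrite -!rcons_cat => Hp.
have Hp' : (0 < pi (m ++ s))%R := lt_le_trans Hp (pi_rcons_le _ _).
have {}IH := IH Hp'.
have Y0 : (0 < pi (n' ++ s))%R.
  have : (0 < pi (n' ++ s) * pi m)%R by rewrite IH mulr_gt0.
  by rewrite pmulr_lgt0.
have HT' : Tn s0 T (n' ++ s) = Tn s0 T (m ++ s) by rewrite !Tn_cat HT.
have := Hm a (n' ++ s) (m ++ s) Y0 Hp' HT'.
rewrite /cond_pi => /eqP; rewrite eqr_div ?(gt_eqF Y0) ?(gt_eqF Hp') // => /eqP E.
apply: (mulIf (negbT (gt_eqF Hp'))).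
rewrite mulrAC E -mulrA IH; ring.
Qed.

Lemma cut_cost m n' s : cost pi n' <= cost pi m -> (pi m <= pi n')%R -> (0 < pi m)%R ->
  (0 < pi (m ++ s))%R -> (pi (n' ++ s) * pi m = pi (m ++ s) * pi n')%R ->
  cost pi (n' ++ s) <= cost pi (m ++ s).
Proof.
move=> Hc Hpp pm P0 E.
have pn : (0 < pi n')%R by apply: lt_le_trans Hpp.
have P1 : (0 < pi (n' ++ s))%R.
  have : (0 < pi (n' ++ s) * pi m)%R by rewrite E mulr_gt0.
  by rewrite pmulr_lgt0.
move: Hc; rewrite /cost (gt_eqF pm) (gt_eqF pn) (gt_eqF P0) (gt_eqF P1) !lee_fin.
rewrite /ell !size_cat -!addSn !natrD.
move: ((size n').+1%:R)%R ((size m).+1%:R)%R ((size s)%:R)%R (ler0n R (size s)) => l' l k k0.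
rewrite ler_pdivrMr // mulrAC ler_pdivlMr // => H.
rewrite ler_pdivrMr // mulrAC ler_pdivlMr //.
rewrite -(ler_pM2r pm) -[X in (_ <= X)%R]mulrA E.
have kP : (0 <= k * pi (m ++ s))%R by rewrite mulr_ge0 // ltW.
move: (pi (m ++ s)) P0 kP (pi n') pn (pi m) pm Hpp H => a a0 ka b b0 c c0 cb Hl.
nra.
Qed.

End Aux.

Section Run.
Variables (R : realType) (A : finType) (S : Type) (s0 : S) (T : S -> A -> S)
  (G : S -> Prop) (pi : seq A -> R).
Hypothesis Hpol : is_policy pi.

Local Notation step := (step s0 T G pi).
Local Notation cost := (cost pi).
Local Notation Tn := (Tn s0 T).

Lemma run_fun c tr : run s0 T G pi c tr -> exists cs : nat -> config A,
  cs 0%N = c /\ forall i, (i < size tr)%N -> step (cs i) (nth [::] tr i) (cs i.+1).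
Proof.
elim=> [c0|c0 n c' tr' Hs _ [cs [H0 H]]]; first by exists (fun _ => c0).
exists (fun i => if i is j.+1 then cs j else c0); split => // [[|i]] /=.
  by rewrite H0.
by move=> Hi; apply: H.
Qed.

Lemma step_inv c n c' : step c n c' ->
  [/\ n \in frontier c, (forall m, m \in frontier c -> cost n <= cost m) &
   [\/ c' = Config [::] (visited c),
       state_cut s0 T pi c n /\ c' = Config (rem n (frontier c)) (visited c) |
       c' = Config (rem n (frontier c) ++ children n)
                  (if `[< markovian s0 T pi >] then n :: visited c else visited c)]].
Proof. by case=> {c n c'} c n H1 H2 *; split => //; [apply: Or31|apply: Or32|apply: Or33]. Qed.

Variables (tr : seq (seq A)) (cs : nat -> config A).
Hypothesis Hcs0 : cs 0%N = init_config A.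
Hypothesis Hstep : forall i, (i < size tr)%N -> step (cs i) (nth [::] tr i) (cs i.+1).

Lemma sel_in i : (i < size tr)%N -> nth [::] tr i \in frontier (cs i) /\
  (forall m, m \in frontier (cs i) -> cost (nth [::] tr i) <= cost m).
Proof. by move=> /Hstep /step_inv []. Qed.

Lemma not_goal i : (i.+1 < size tr)%N -> frontier (cs i.+1) != [::].
Proof. by move=> /sel_in [H _]; apply/eqP => E; rewrite E in H. Qed.

Lemma inv t : (t <= size tr)%N ->
  (forall v, v \in visited (cs t) -> exists2 t', (t' < t)%N & nth [::] tr t' = v) /\
  (forall v y, v \in visited (cs t) -> y \in frontier (cs t) -> cost v <= cost y).
Proof.
elim: t => [_|t IH Ht]; first by rewrite Hcs0.
have Ht' : (t < size tr)%N by [].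
have [IH1 IH2] := IH (ltnW Ht).
have [Hin Hmin []] := step_inv (Hstep Ht').
- move=> E; rewrite E /=; split => // v /IH1 [t' Ht1 Ht2].
  by exists t' => //; apply: ltnW.
- move=> [_ E]; rewrite E /=; split.
    by move=> v /IH1 [t' Ht1 Ht2]; exists t' => //; apply: ltnW.
  by move=> v y Hv /mem_rem Hy; apply: IH2.
- have Hch : forall v y, cost v <= cost (nth [::] tr t) ->
      y \in rem (nth [::] tr t) (frontier (cs t)) ++ children (nth [::] tr t) ->
      (forall y, y \in frontier (cs t) -> cost v <= cost y) -> cost v <= cost y.
    move=> v y Hvn; rewrite mem_cat => /orP [/mem_rem Hy H|/mapP [a _ ->] _].
      exact: H.
    exact: le_trans Hvn (cost_rcons Hpol _ _).
  move=> E; rewrite E /=; split.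
    case: ifP => _ v; last by move=> /IH1 [t' Ht1 Ht2]; exists t' => //; apply: ltnW.
    rewrite in_cons => /orP [/eqP ->|/IH1 [t' Ht1 Ht2]]; first by exists t.
    by exists t' => //; apply: ltnW.
  have Hold : forall v y, v \in visited (cs t) ->
      y \in rem (nth [::] tr t) (frontier (cs t)) ++ children (nth [::] tr t) ->
      cost v <= cost y.
    move=> v y Hv Hy; apply: Hch Hy _; first exact: IH2 Hv Hin.
    by move=> y'; apply: IH2.
  case: ifP => _ v y; last exact: Hold.
  rewrite in_cons => /orP [/eqP ->|Hv] Hy; last exact: Hold.
  by apply: Hch Hy Hmin.
Qed.

Lemma persist u i y : (u <= i)%N -> (i < size tr)%N -> y \in frontier (cs u) ->
  (forall w, (u <= w)%N -> (w < i)%N -> nth [::] tr w != y) -> y \in frontier (cs i).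
Proof.
elim: i => [|i IH] Hu Hi Hy Hw.
  by move: Hu; rewrite leqn0 => /eqP <-.
case: (ltnP u i.+1) => Hu'; last first.
  have E : u = i.+1 by apply/eqP; rewrite eqn_leq Hu Hu'.
  by rewrite -E.
move: Hu' => Hu0; have Hu1 : (u <= i)%N by [].
have Hi' : (i < size tr)%N by apply: ltnW.
have Hyi : y \in frontier (cs i).
  apply: IH => // w H1 H2; apply: Hw => //; exact: ltnW.
have Hne : nth [::] tr i != y by apply: Hw => //.
have [_ _ []] := step_inv (Hstep Hi').
- by move=> E; have := not_goal Hi; rewrite E.
- by move=> [_ ->] /=; apply: rem_mem => //; rewrite eq_sym.
- by move=> -> /=; rewrite mem_cat rem_mem // eq_sym.
Qed.

Lemma nth0 : (0 < size tr)%N -> nth [::] tr 0 = [::].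
Proof. by move=> /sel_in [H _]; move: H; rewrite Hcs0 /= inE => /eqP. Qed.

Lemma main i : (i < size tr)%N -> forall x, (0 < pi x)%R ->
  cost x < cost (nth [::] tr i) -> exists2 j, (j < i)%N & Tn (nth [::] tr j) = Tn x.
Proof.
case: i => [|i0] Hi x Hx Hlt.
  move: Hlt; rewrite nth0 //; have := cost_cat Hpol [::] x.
  by rewrite cat0s leNgt => /negbTE ->.
set i := i0.+1 in Hi Hlt *.
have Hc0 : (0 < size tr)%N by apply: leq_ltn_trans Hi.
suff Claim : forall k τ m suf, size suf = k -> (τ < i)%N -> nth [::] tr τ = m ->
    (0 < pi (m ++ suf))%R -> cost (m ++ suf) < cost (nth [::] tr i) ->
    exists2 j, (j < i)%N & Tn (nth [::] tr j) = Tn (m ++ suf).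
  by apply: (Claim (size x) 0%N [::] x) => //; rewrite nth0.
elim/ltn_ind => k IHk τ; elim/ltn_ind: τ => τ IHτ m suf Hk Hτ Hm Hp Hc.
case: suf Hk Hp Hc => [|a rest] Hk Hp Hc.
  by exists τ => //; rewrite Hm cats0.
case: (pselect (exists τ2 pre suf2, [/\ (τ2 < i)%N, (0 < size pre)%N,
   a :: rest = pre ++ suf2 & nth [::] tr τ2 = m ++ pre])) =>
   [[τ2 [pre [suf2 [H1 H2 H3 H4]]]]|Hno].
  have Hsz : (size suf2 < k)%N.
    by rewrite -Hk H3 size_cat -addn1 addnC leq_add2r.
  have := IHk (size suf2) Hsz τ2 (m ++ pre) suf2 erefl H1 H4.
  by rewrite -catA -H3; apply.
have Hτi : (τ < size tr)%N by apply: ltn_trans Hτ Hi.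
subst m.
have [Hin Hmin []] := step_inv (Hstep Hτi).
- move=> E; have := not_goal (leq_ltn_trans Hτ Hi); rewrite E.
  by [].
- move=> [[Hmk [n' Hn' [HT Hpp]]] _].
  have [IH1 IH2] := inv (ltnW Hτi).
  have [τ' Hτ' Hn'e] := IH1 n' Hn'.
  have Hcn := IH2 n' _ Hn' Hin.
  have pm : (0 < pi (nth [::] tr τ))%R := lt_le_trans Hp (pi_cat_le Hpol _ _).
  have pn : (0 < pi n')%R := lt_le_trans pm Hpp.
  have E := markov_ext Hpol Hmk pm pn HT Hp.
  have Hc' := cut_cost Hcn Hpp pm Hp E.
  have Hp' : (0 < pi (n' ++ a :: rest))%R.
    have : (0 < pi (n' ++ a :: rest) * pi (nth [::] tr τ))%R by rewrite E mulr_gt0.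
    by rewrite pmulr_lgt0.
  have [j Hj HTj] := IHτ τ' Hτ' n' (a :: rest) Hk (ltn_trans Hτ' Hτ) Hn'e Hp'
    (le_lt_trans Hc' Hc).
  by exists j => //; rewrite HTj !Tn_cat HT.
- move=> E.
  have Hy : rcons (nth [::] tr τ) a \in frontier (cs τ.+1).
    rewrite E /= mem_cat; apply/orP; right; apply/mapP; exists a => //.
    by rewrite mem_enum.
  have Hyi : rcons (nth [::] tr τ) a \in frontier (cs i).
    apply: (persist Hτ Hi Hy) => w _ Hw; apply/eqP => Ew; apply: Hno.
    by exists w, [:: a], rest; split => //; rewrite Ew cats1.
  have [_ Hmi] := sel_in Hi.
  have := le_trans (Hmi _ Hyi) (cost_cat Hpol _ rest).
  by rewrite cat_rcons leNgt Hc.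
Qed.

End Run.

Theorem theorem2 (R : realType) (A : finType) (S : Type) (s0 : S)
  (T : S -> A -> S) (G : S -> Prop) (pi : seq A -> R) :
  is_policy pi ->
  forall tr : seq (seq A), run s0 T G pi (init_config A) tr ->
  (* (i) best-first order over states *)
  (forall (s1 s2 : S) (i : nat),
      cost_state s0 T pi s1 < cost_state s0 T pi s2 ->
      (i < size tr)%N -> Tn s0 T (nth [::] tr i) = s2 ->
      exists j : nat, (j < i)%N /\ Tn s0 T (nth [::] tr j) = s1) /\
  (* (ii) each state is first selected at its lowest cost *)
  (forall (s : S) (i : nat),
      (i < size tr)%N -> Tn s0 T (nth [::] tr i) = s ->
      (forall j : nat, (j < i)%N -> Tn s0 T (nth [::] tr j) <> s) ->
      cost pi (nth [::] tr i) = cost_state s0 T pi s).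
Proof.
move=> Hpol tr Hrun; have [cs [H0 Hst]] := run_fun Hrun.
have Hlb : forall n, cost_state s0 T pi (Tn s0 T n) <= cost pi n.
  by move=> n; apply: ereal_inf_lbound; exists n.
split.
- move=> s1 s2 i Hlt Hi Hs2.
  have Hl : cost_state s0 T pi s1 < cost pi (nth [::] tr i).
    by apply: lt_le_trans Hlt _; rewrite -Hs2.
  have [_ [x Hx <-] Hxl] := ereal_inf_lt Hl.
  have Hp := cost_pos Hpol (lt_le_trans Hxl (leey _)).
  have [j Hj HT] := main Hpol H0 Hst Hi Hp Hxl.
  by exists j; split => //; rewrite HT.
- move=> s i Hi Hs Hfirst; apply/eqP; rewrite eq_le -{2}Hs Hlb andbT leNgt.
  apply/negP => Hl.
  have [_ [x Hx <-] Hxl] := ereal_inf_lt Hl.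
  have Hp := cost_pos Hpol (lt_le_trans Hxl (leey _)).
  have [j Hj HT] := main Hpol H0 Hst Hi Hp Hxl.
  by apply: (Hfirst j Hj); rewrite HT.
Qed.
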